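(* Let $D$ be an oriented link (or tangle) diagram with a shaping $\{\chi_i=(a_i,b_i,m_i)\}$, and let $c$ be a crossing of $D$, with segments labeled $1,2,1',2'$ as described in the context. If one of the relations \[ b_{2'}=b_1,\qquad b_2=m_1b_1,\qquad m_2b_2=m_1b_{1'},\qquad m_2b_{2'}=b_{1'} \] holds, then all four of them hold. In this case (the crossing is called pinched) the four quantities $b_{2'}/b_1$, $m_1b_1/b_2$, $m_2b_2/(m_1b_{1'})$, $b_{1'}/(m_2b_{2'})$ all equal $1$.
   Context: A shape is a triple $\chi=(a,b,m)$ of nonzero complex numbers. The segments of an oriented diagram are the edges of its underlying $4$-valent planar graph. At a crossing, rotate the picture so that both strands point to the right; label the incoming upper-left segment $1$, the incoming lower-left segment $2$, the outgoing lower-right segment $1'$ (the continuation of segment $1$), and the outgoing upper-right segment $2'$ (the continuation of segment $2$). Each crossing has a sign $\epsilon=\pm1$. A shaping assigns a shape $\chi_i=(a_i,b_i,m_i)$ to each segment so that at every crossing $m_{1'}=m_1$, $m_{2'}=m_2$, all components of $\chi_{1'},\chi_{2'}$ are finite and nonzero, and: at a positive crossing \[ A=1-\frac{m_1b_1}{b_2}\Big(1-\frac{a_1}{m_1}\Big)\Big(1-\frac{1}{m_2a_2}\Big),\quad a_{1'}=a_1A^{-1},\quad a_{2'}=a_2A, \] \[ b_{1'}=\frac{m_2b_2}{m_1}\Big(1-m_2a_2\big(1-\tfrac{b_2}{m_1b_1}\big)\Big)^{-1},\qquad b_{2'}=b_1\Big(1-\frac{m_1}{a_1}\big(1-\tfrac{b_2}{m_1b_1}\big)\Big);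 \] and at a negative crossing \[ \tilde A=1-\frac{b_2}{m_1b_1}(1-m_1a_1)\Big(1-\frac{m_2}{a_2}\Big),\quad a_{1'}=a_1\tilde A^{-1},\quad a_{2'}=a_2\tilde A, \] \[ b_{1'}=\frac{m_2b_2}{m_1}\Big(1-\frac{a_2}{m_2}\big(1-\tfrac{m_1b_1}{b_2}\big)\Big),\qquad b_{2'}=b_1\Big(1-\frac{1}{m_1a_1}\big(1-\tfrac{m_1b_1}{b_2}\big)\Big)^{-1}. \] *)

(* Defs.v *)
From HB Require Import structures.
From mathcomp Require Import all_boot all_order all_algebra.
From mathcomp Require Import complex.
From mathcomp Require Import reals.
Set Implicit Arguments. Unset Strict Implicit. Unset Printing Implicit Defensive.
Import Order.TTheory GRing.Theory Num.Theory.
Local Open Scope ring_scope.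

Record cshape (F : Type) := Shape { sa : F; sb : F; sm : F }.

Definition shape_nz (F : fieldType) (chi : cshape F) : Prop :=
  sa chi != 0 /\ sb chi != 0 /\ sm chi != 0.

Inductive crossing_sign := Positive | Negative.

(* The shaping relations at a crossing with incoming segments 1, 2 and
   outgoing segments 1' (continuation of 1), 2' (continuation of 2).
   Finiteness/nonzeroness of chi1', chi2' is imposed separately by shape_nz;
   note x^-1 = 0 for x = 0 in MathComp, so a pole would force a zero value
   and is thereby excluded by shape_nz. *)
Definition crossing_rel (F : fieldType) (eps : crossing_sign)
  (c1 c2 c1' c2' : cshape F) : Prop :=
  let a1 := sa c1 in let b1 := sb c1 in let m1 := sm c1 in
  let a2 := sa c2 in let b2 := sb c2 in let m2 := sm c2 in
  sm c1' = m1 /\ sm c2' = m2 /\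
  match eps with
  | Positive =>
      let A := 1 - m1 * b1 / b2 * (1 - a1 / m1) * (1 - 1 / (m2 * a2)) in
      sa c1' = a1 * A^-1 /\ sa c2' = a2 * A /\
      sb c1' = m2 * b2 / m1 * (1 - m2 * a2 * (1 - b2 / (m1 * b1)))^-1 /\
      sb c2' = b1 * (1 - m1 / a1 * (1 - b2 / (m1 * b1)))
  | Negative =>
      let A := 1 - b2 / (m1 * b1) * (1 - m1 * a1) * (1 - m2 / a2) in
      sa c1' = a1 * A^-1 /\ sa c2' = a2 * A /\
      sb c1' = m2 * b2 / m1 * (1 - a2 / m2 * (1 - m1 * b1 / b2)) /\
      sb c2' = b1 * (1 - 1 / (m1 * a1) * (1 - m1 * b1 / b2))^-1
  end.

Definition shaped_crossing (F : fieldType) (eps : crossing_sign)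
  (c1 c2 c1' c2' : cshape F) : Prop :=
  [/\ shape_nz c1, shape_nz c2, shape_nz c1', shape_nz c2'
    & crossing_rel eps c1 c2 c1' c2'].

(* Main.v *)
Require Import Defs.
From HB Require Import structures.
From mathcomp Require Import all_boot all_order all_algebra.
From mathcomp Require Import complex.
From mathcomp Require Import reals.
From mathcomp Require Import ring.
Import GRing.Theory Num.Theory.
Local Open Scope ring_scope.
Ltac fs := field; repeat (match goal with |- is_true (_ && _) => apply/andP; split end); try assumption.

Lemma key (F : fieldType) (c b1 m1 b2 : F) : c != 0 -> b1 != 0 -> m1 != 0 ->
  c * (1 - b2/(m1*b1)) = 0 -> b2 = m1*b1.
Proof.
move=> c0 b10 m10 /eqP; rewrite mulf_eq0 (negbTE c0) /= subr_eq0 => /eqP h.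
have ->: b2 = b2/(m1*b1) * (m1*b1) by fs.
by rewrite -h mul1r.
Qed.

Lemma keyn (F : fieldType) (c b1 m1 b2 : F) : c != 0 -> b2 != 0 ->
  c * (1 - m1*b1/b2) = 0 -> b2 = m1*b1.
Proof.
move=> c0 b20 /eqP; rewrite mulf_eq0 (negbTE c0) /= subr_eq0 => /eqP h.
have ->: m1*b1 = m1*b1/b2 * b2 by fs. by rewrite -h mul1r.
Qed.

Lemma one_sub (F : fieldType) (t : F) : 1 - t = 1 -> t = 0.
Proof. move=> h; have ht : t = 1 - (1 - t) by ring. by rewrite ht h subrr. Qed.

Lemma inv_one (F : fieldType) (t : F) : t^-1 = 1 -> t = 1.
Proof. by move=> h; rewrite -[t]invrK h invr1. Qed.

Lemma pos_case (F : fieldType) (a1 b1 m1 a2 b2 m2 b1' b2' : F) :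
  a1 != 0 -> b1 != 0 -> m1 != 0 -> a2 != 0 -> b2 != 0 -> m2 != 0 ->
  b1' != 0 ->
  1 - m1 * b1 / b2 * (1 - a1 / m1) * (1 - 1 / (m2 * a2)) != 0 ->
  b1' = m2 * b2 / m1 * (1 - m2 * a2 * (1 - b2 / (m1 * b1)))^-1 ->
  b2' = b1 * (1 - m1 / a1 * (1 - b2 / (m1 * b1))) ->
  (b2' = b1 \/ b2 = m1 * b1 \/ m2 * b2 = m1 * b1' \/ m2 * b2' = b1') ->
  b2 = m1 * b1.
Proof.
move=> a10 b10 m10 a20 b20 m20 b1'0 A0 Hb1 Hb2 [H|[H|[H|H]]] //.
- apply: (@key _ (m1/a1)) => //; first by rewrite mulf_neq0 ?invr_eq0.
  apply: one_sub; apply: (mulfI b10); by rewrite -Hb2 H mulr1.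
- apply: (@key _ (m2*a2)) => //; first by rewrite mulf_neq0.
  apply: one_sub; apply: inv_one.
  have hm : m2 * b2 != 0 by rewrite mulf_neq0.
  apply: (mulfI hm). rewrite mulr1 {2}H Hb1.
  have hh : forall X Y : F, m1 * (X / m1 * Y) = X * Y by move=> X Y; fs.
  by rewrite hh.
- set x := b2 / (m1 * b1) in Hb1 Hb2 A0 *.
  set D := 1 - m2 * a2 * (1 - x) in Hb1.
  set E := 1 - m1 / a1 * (1 - x) in Hb2.
  have D0 : D != 0.
    apply/negP => /eqP D0; move: b1'0; by rewrite Hb1 D0 invr0 mulr0 eqxx.
  have e : m2 * (b1 * E) * D = m2 * b2 / m1.
    by rewrite -Hb2 H Hb1 -mulrA mulVf // mulr1.
  have f : E * D - x = 0.
    have -> : E * D - x = (m2 * (b1 * E) * D - m2 * b2 / m1) / (m2 * b1).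
      rewrite /x; fs.
    by rewrite e subrr mul0r.
  pose Fp := 1 - m1/a1 - m2*a2 + m1 * m2 * a2*(1-x)/a1.
  have g : (1 - x) * Fp = 0.
    rewrite -f /E /D /Fp; fs.
  move/eqP: g; rewrite mulf_eq0 => /orP[/eqP g|/eqP g].
    by apply: (@key _ 1) => //; [exact: oner_neq0 | rewrite mul1r].
  have h : (1-a1/m1)*(1-1/(m2*a2)) - x = a1/(m1 * m2 * a2) * Fp.
    rewrite /Fp /x; fs.
  rewrite g mulr0 in h. move/eqP: h; rewrite subr_eq0 => /eqP h.
  move: A0; rewrite -mulrA h /x.
  have -> : 1 - m1 * b1 / b2 * (b2 / (m1 * b1)) = 0 by fs.
  by rewrite eqxx.
Qed.

Lemma neg_case (F : fieldType) (a1 b1 m1 a2 b2 m2 b1' b2' : F) :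
  a1 != 0 -> b1 != 0 -> m1 != 0 -> a2 != 0 -> b2 != 0 -> m2 != 0 ->
  b2' != 0 ->
  1 - b2 / (m1 * b1) * (1 - m1 * a1) * (1 - m2 / a2) != 0 ->
  b1' = m2 * b2 / m1 * (1 - a2 / m2 * (1 - m1 * b1 / b2)) ->
  b2' = b1 * (1 - 1 / (m1 * a1) * (1 - m1 * b1 / b2))^-1 ->
  (b2' = b1 \/ b2 = m1 * b1 \/ m2 * b2 = m1 * b1' \/ m2 * b2' = b1') ->
  b2 = m1 * b1.
Proof.
move=> a10 b10 m10 a20 b20 m20 b2'0 A0 Hb1 Hb2 [H|[H|[H|H]]] //.
- apply: (@keyn _ (1/(m1*a1))) => //; first by rewrite mul1r invr_eq0 mulf_neq0.
  apply: one_sub; apply: inv_one; apply: (mulfI b10); by rewrite -Hb2 H mulr1.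
- apply: (@keyn _ (a2/m2)) => //; first by rewrite mulf_neq0 ?invr_eq0.
  apply: one_sub.
  have hm : m2 * b2 != 0 by rewrite mulf_neq0.
  apply: (mulfI hm). rewrite mulr1 {2}H Hb1.
  have hh : forall X Y : F, m1 * (X / m1 * Y) = X * Y by move=> X Y; fs.
  by rewrite hh.
- set z := m1 * b1 / b2 in Hb1 Hb2 *.
  set G := 1 - 1 / (m1 * a1) * (1 - z) in Hb2.
  set Hh := 1 - a2 / m2 * (1 - z) in Hb1.
  have G0 : G != 0.
    apply/negP => /eqP G0; move: b2'0; by rewrite Hb2 G0 invr0 mulr0 eqxx.
  have e : m2 * b1 = b1' * G.
    rewrite -H Hb2; fs.
  have f : Hh * G - z = 0.
    have -> : Hh * G - z = (m2 * b2 / m1 * Hh * G - m2 * b1) * m1 / (m2 * b2).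
      rewrite /z; fs.
    by rewrite -Hb1 -e subrr !mul0r.
  pose Fn := 1 - 1 / (m1 * a1) - a2 / m2 + 1 / (m1 * a1) * (a2 / m2) * (1 - z).
  have g : (1 - z) * Fn = 0.
    rewrite -f /G /Hh /Fn; fs.
  move/eqP: g; rewrite mulf_eq0 => /orP[/eqP g|/eqP g].
    by apply: (@keyn _ 1) => //; [exact: oner_neq0 | rewrite mul1r].
  have h : (1 - m1 * a1) * (1 - m2 / a2) - z = (m1 * a1 * m2 / a2) * Fn.
    rewrite /Fn /z; fs.
  rewrite g mulr0 in h. move/eqP: h; rewrite subr_eq0 => /eqP h.
  move: A0; rewrite -mulrA h /z.
  have -> : 1 - b2 / (m1 * b1) * (m1 * b1 / b2) = 0 by fs.
  by rewrite eqxx.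
Qed.

Lemma finish (F : fieldType) (b1 m1 b2 m2 b1' b2' : F) :
  b1 != 0 -> m1 != 0 -> b2 != 0 -> m2 != 0 -> b1' != 0 -> b2' != 0 ->
  (b2' = b1 /\ b2 = m1 * b1 /\ m2 * b2 = m1 * b1' /\ m2 * b2' = b1') ->
  (b2' = b1 /\ b2 = m1 * b1 /\ m2 * b2 = m1 * b1' /\ m2 * b2' = b1') /\
  (b2' / b1 = 1 /\ m1 * b1 / b2 = 1 /\ m2 * b2 / (m1 * b1') = 1 /\
   b1' / (m2 * b2') = 1).
Proof.
move=> b10 m10 b20 m20 b1'0 b2'0 [e1 [e2 [e3 e4]]]; split; first by [].
split; first by rewrite e1 divff.
split; first by rewrite -e2 divff.
split; first by rewrite e3 divff // mulf_neq0.
by rewrite e4 divff.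
Qed.

Lemma pos_full (F : fieldType) (a1 b1 m1 a2 b2 m2 b1' b2' : F) :
  a1 != 0 -> b1 != 0 -> m1 != 0 -> a2 != 0 -> b2 != 0 -> m2 != 0 ->
  b1' != 0 ->
  1 - m1 * b1 / b2 * (1 - a1 / m1) * (1 - 1 / (m2 * a2)) != 0 ->
  b1' = m2 * b2 / m1 * (1 - m2 * a2 * (1 - b2 / (m1 * b1)))^-1 ->
  b2' = b1 * (1 - m1 / a1 * (1 - b2 / (m1 * b1))) ->
  (b2' = b1 \/ b2 = m1 * b1 \/ m2 * b2 = m1 * b1' \/ m2 * b2' = b1') ->
  (b2' = b1 /\ b2 = m1 * b1 /\ m2 * b2 = m1 * b1' /\ m2 * b2' = b1').
Proof.
move=> a10 b10 m10 a20 b20 m20 b1'0 A0 hb1 hb2 Hor.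
have hb := @pos_case _ _ _ _ _ _ _ _ _ a10 b10 m10 a20 b20 m20 b1'0 A0 hb1 hb2 Hor.
have x1 : b2 / (m1 * b1) = 1 by rewrite hb divff // mulf_neq0.
rewrite x1 subrr !mulr0 subr0 invr1 !mulr1 in hb1 hb2.
split; first by [].
split; first by [].
split; first by rewrite hb1; fs.
by rewrite hb1 hb2 hb; fs.
Qed.

Lemma neg_full (F : fieldType) (a1 b1 m1 a2 b2 m2 b1' b2' : F) :
  a1 != 0 -> b1 != 0 -> m1 != 0 -> a2 != 0 -> b2 != 0 -> m2 != 0 ->
  b2' != 0 ->
  1 - b2 / (m1 * b1) * (1 - m1 * a1) * (1 - m2 / a2) != 0 ->
  b1' = m2 * b2 / m1 * (1 - a2 / m2 * (1 - m1 * b1 / b2)) ->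
  b2' = b1 * (1 - 1 / (m1 * a1) * (1 - m1 * b1 / b2))^-1 ->
  (b2' = b1 \/ b2 = m1 * b1 \/ m2 * b2 = m1 * b1' \/ m2 * b2' = b1') ->
  (b2' = b1 /\ b2 = m1 * b1 /\ m2 * b2 = m1 * b1' /\ m2 * b2' = b1').
Proof.
move=> a10 b10 m10 a20 b20 m20 b2'0 A0 hb1 hb2 Hor.
have hb := @neg_case _ _ _ _ _ _ _ _ _ a10 b10 m10 a20 b20 m20 b2'0 A0 hb1 hb2 Hor.
have x1 : m1 * b1 / b2 = 1 by rewrite -hb divff.
rewrite x1 subrr !mulr0 subr0 invr1 !mulr1 in hb1 hb2.
split; first by [].
split; first by [].
split; first by rewrite hb1; fs.
by rewrite hb1 hb2 hb; fs.
Qed.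

Theorem proposition2p15 (R : realType) (eps : crossing_sign)
  (c1 c2 c1' c2' : cshape (complex R)) :
  shaped_crossing eps c1 c2 c1' c2' ->
  let b1 := sb c1 in let m1 := sm c1 in let b2 := sb c2 in let m2 := sm c2 in
  let b1' := sb c1' in let b2' := sb c2' in
  (b2' = b1 \/ b2 = m1 * b1 \/ m2 * b2 = m1 * b1' \/ m2 * b2' = b1') ->
  (b2' = b1 /\ b2 = m1 * b1 /\ m2 * b2 = m1 * b1' /\ m2 * b2' = b1') /\
  (b2' / b1 = 1 /\ m1 * b1 / b2 = 1 /\ m2 * b2 / (m1 * b1') = 1 /\
   b1' / (m2 * b2') = 1).
Proof.
case=> [[a10 [b10 m10]] [a20 [b20 m20]] [a1'0 [b1'0 m1'0]] [a2'0 [b2'0 m2'0]]].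
rewrite /crossing_rel => -[_ [_ rel]] /= Hor.
apply: finish => //.
case: eps rel => -[ha1 [ha2 [hb1 hb2]]].
- apply: (@pos_full _ _ _ _ _ _ _ _ _ a10 b10 m10 a20 b20 m20 b1'0 _ hb1 hb2 Hor).
  by move: a2'0; rewrite ha2 mulf_eq0 negb_or => /andP[].
- apply: (@neg_full _ _ _ _ _ _ _ _ _ a10 b10 m10 a20 b20 m20 b2'0 _ hb1 hb2 Hor).
  by move: a2'0; rewrite ha2 mulf_eq0 negb_or => /andP[].
Qed.
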